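(* Let $(V,(\cdot\,,\cdot)_V)$ be an admissible integral $\mathrm{Cl}_{n,0}$-module (with positive definite inner product $(\cdot\,,\cdot)_V$) and $(U,\langle\cdot\,,\cdot\rangle_U)$ an admissible integral $\mathrm{Cl}_{0,2}$-module. Then the scalar product space $V\otimes U$ with scalar product $\langle v\otimes u,v'\otimes u'\rangle=(v,v')_V\langle u,u'\rangle_U$ is (carries the structure of) an admissible integral $\mathrm{Cl}_{0,n+2}$-module.
   Context: A scalar product is a real symmetric non-degenerate bilinear form. $\mathrm{Cl}_{p,q}$ is the real Clifford algebra generated by $\mathbb R^{p,q}$ ($\mathbb R^{p+q}$ with quadratic form $x_1^2+\dots+x_p^2-x_{p+1}^2-\dots-x_{p+q}^2$) with relation $z^2=-\langle z,z\rangle\cdot1$; orthonormal generators $z_k$ satisfy $\langle z_k,z_l\rangle=0$ ($k\neq l$), $\langle z_k,z_k\rangle=\pm1$. A $\mathrm{Cl}_{p,q}$-module $V$ with representation $J$ is admissible if it carries a scalar product with $\langle J_zu,v\rangle_V=-\langle u,J_zv\rangle_V$ for all $z,u,v$; it is an admissible integral module if it has a basis $\{v_\alpha\}$ with $\langle v_\alpha,v_\beta\rangle_V=0$ ($\alpha\neq\beta$), $\langle v_\alpha,v_\alpha\rangle_V=\pm1$, and $\langle J_{z_k}v_\alpha,v_\beta\rangle_V\in\{1,-1,0\}$ for all orthonormal generators $z_k$ and all $\alpha,\beta$. *)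

(* Defs.v *)
From HB Require Import structures.
From mathcomp Require Import all_boot all_order all_algebra.
From mathcomp Require Import reals.
From mathcomp.real_closed Require Export mxtens.
Set Implicit Arguments. Unset Strict Implicit. Unset Printing Implicit Defensive.
Import Order.TTheory GRing.Theory Num.Theory.
Local Open Scope ring_scope.

(* Finite-dimensional real vector spaces are represented in coordinates:
   V = R^N as column vectors 'cV[R]_N.  A bilinear form is represented by
   its Gram matrix G : <u, v> = u^T G v. *)

Section Defs.
Variable R : realType.

Definition bform {N : nat} (G : 'M[R]_N) (u v : 'cV[R]_N) : R :=
  (u^T *m G *m v) 0 0.

Definition scalar_product {N : nat} (G : 'M[R]_N) : Prop :=
  G^T = G /\ G \in unitmx.

Definition pos_definite {N : nat} (G : 'M[R]_N) : Prop :=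
  forall u : 'cV[R]_N, u != 0 -> 0 < bform G u u.

Definition qform {p q : nat} (z : 'rV[R]_(p + q)) : R :=
  \sum_(i < p + q) (if (i < p)%N then 1 else -1) * (z 0 i) ^+ 2.

Definition gen {p q : nat} (k : 'I_(p + q)) : 'rV[R]_(p + q) := delta_mx 0 k.

(* A Cl_{p,q}-module structure on R^N: by the universal property of the
   Clifford algebra, a representation is the same as a linear map
   J : R^{p,q} -> End(R^N) with J_z^2 = - <z,z> Id. *)
Definition clmodule (p q N : nat) (J : 'rV[R]_(p + q) -> 'M[R]_N) : Prop :=
  (forall (a : R) (z w : 'rV[R]_(p + q)), J (a *: z + w) = a *: J z + J w) /\
  (forall z : 'rV[R]_(p + q), J z *m J z = - (qform z) *: 1%:M).

Definition admissible (p q N : nat) (J : 'rV[R]_(p + q) -> 'M[R]_N)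
  (G : 'M[R]_N) : Prop :=
  clmodule J /\ scalar_product G /\
  forall (z : 'rV[R]_(p + q)) (u v : 'cV[R]_N),
    bform G (J z *m u) v = - bform G u (J z *m v).

Definition pm1 (x : R) : Prop := x = 1 \/ x = -1.
Definition pm10 (x : R) : Prop := x = 1 \/ x = -1 \/ x = 0.

Definition admissible_integral (p q N : nat) (J : 'rV[R]_(p + q) -> 'M[R]_N)
  (G : 'M[R]_N) : Prop :=
  admissible J G /\
  exists B : 'M[R]_N, B \in unitmx /\
    (forall a b : 'I_N, a != b -> bform G (col a B) (col b B) = 0) /\
    (forall a : 'I_N, pm1 (bform G (col a B) (col a B))) /\
    (forall (k : 'I_(p + q)) (a b : 'I_N),
        pm10 (bform G (J (gen k) *m col a B) (col b B))).

End Defs.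

(* Main.v *)
Require Import Defs.
From HB Require Import structures.
From mathcomp Require Import all_boot all_order all_algebra.
From mathcomp Require Import reals.
From mathcomp.real_closed Require Import mxtens.
Import GRing.Theory Num.Theory.
Local Open Scope ring_scope.

Set Warnings "-notation-overridden,-ambiguous-paths".
From mathcomp Require Import ring lra zify.
Import Order.TTheory.



Section Gen.
Variable R : realType.

Lemma col_mulmx m n p (A : 'M[R]_(m, n)) (B : 'M[R]_(n, p)) k :
  col k (A *m B) = A *m col k B.
Proof. by rewrite !colE mulmxA. Qed.

Lemma col_entry m n (M : 'M[R]_(m, n)) i k : col k M i 0 = M i k.
Proof. by rewrite !mxE. Qed.

Lemma row_entry m n (M : 'M[R]_(m, n)) i k : row i M 0 k = M i k.
Proof. by rewrite !mxE. Qed.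

Lemma tr_entry m n (M : 'M[R]_(m, n)) i k : M^T i k = M k i.
Proof. by rewrite !mxE. Qed.

Lemma mulmx_colE m n p (A : 'M[R]_(m, n)) (B : 'M[R]_(n, p)) i k :
  (A *m B) i k = (A *m col k B) i 0.
Proof. by rewrite -col_mulmx col_entry. Qed.

Lemma bform_col m n (G : 'M[R]_n) (X Y : 'M[R]_(n, m)) a b :
  bform G (col a X) (col b Y) = (X^T *m G *m Y) a b.
Proof.
by rewrite /bform tr_col -row_mul -col_mulmx col_entry -row_mul row_entry.
Qed.

Lemma bform_sym n (G : 'M[R]_n) u v : G^T = G -> bform G u v = bform G v u.
Proof.
move=> sG; rewrite /bform.
have -> : (v^T *m G *m u) = (u^T *m G *m v)^T by rewrite !trmx_mul trmxK sG mulmxA.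
by rewrite tr_entry.
Qed.

Lemma bform_skew n (G A : 'M[R]_n) u v : A^T *m G = - (G *m A) ->
  bform G (A *m u) v = - bform G u (A *m v).
Proof.
move=> h; rewrite /bform trmx_mul -!mulmxA [A^T *m _]mulmxA h.
by rewrite mulNmx mulmxN mxE !mulmxA.
Qed.

Lemma bformN n (G : 'M[R]_n) u v : bform G u (- v) = - bform G u v.
Proof. by rewrite /bform mulmxN mxE. Qed.

Lemma bformD n (G : 'M[R]_n) u v w : bform G (u + v) w = bform G u w + bform G v w.
Proof. by rewrite /bform linearD /= !mulmxDl mxE. Qed.

Lemma bformDr n (G : 'M[R]_n) u v w : bform G w (u + v) = bform G w u + bform G w v.
Proof. by rewrite /bform !mulmxDr mxE. Qed.

Lemma bformZ n (G : 'M[R]_n) (c : R) u v : bform G (c *: u) v = c * bform G u v.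
Proof. by rewrite /bform linearZ /= -!scalemxAl mxE. Qed.

Lemma bformZr n (G : 'M[R]_n) (c : R) u v : bform G u (c *: v) = c * bform G u v.
Proof. by rewrite /bform -!scalemxAr mxE. Qed.

Lemma bform_delta n (G : 'M[R]_n) i j :
  bform G (delta_mx i 0) (delta_mx j 0) = G i j.
Proof. by rewrite /bform trmx_delta -rowE -colE !mxE. Qed.

End Gen.
Section C4.
Variable R : realType.
Definition m4 (l : seq (seq R)) : 'M[R]_4 := \matrix_(i, j) nth 0 (nth [::] l i) j.

Definition j1m := m4 [:: [:: 0; 1; 0; 0]; [:: 1; 0; 0; 0]; [:: 0; 0; 0; 1]; [:: 0; 0; 1; 0]].
Definition j2m := m4 [:: [:: 0; 0; 1; 0]; [:: 0; 0; 0; -1]; [:: 1; 0; 0; 0]; [:: 0; -1; 0; 0]].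
Definition dm := m4 [:: [:: 0; 1; 0; 0]; [:: 1; 0; 0; 0]; [:: 0; 0; 0; -1]; [:: 0; 0; -1; 0]].
Definition g0 := m4 [:: [:: 1; 0; 0; 0]; [:: 0; -1; 0; 0]; [:: 0; 0; -1; 0]; [:: 0; 0; 0; 1]].

Ltac c4 := apply/matrixP; case=> [[|[|[|[|?]]]] ?] //; case=> [[|[|[|[|?]]]] ?] //;
  rewrite !mxE ?big_ord_recr ?big_ord0 /= ?mxE /= ?(mul0r,mulr0,mul1r,mulr1,add0r,addr0,mulN1r,mulrN1,oppr0,mulNr,mulrN,opprK) /=; lra.

Lemma c_dj1 : dm *m j1m = j1m *m dm. Proof. c4. Qed.
Lemma c_dj2 : dm *m j2m = j2m *m dm. Proof. c4. Qed.
Lemma c_dd : dm *m dm = 1%:M. Proof. c4. Qed.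
Lemma c_dskew : dm^T *m g0 = - (g0 *m dm). Proof. c4. Qed.
Definition km := m4 [:: [:: 0; 0; 1; 0]; [:: 0; 0; 0; -1]; [:: -1; 0; 0; 0]; [:: 0; 1; 0; 0]].
Definition tm := m4 [:: [:: 0; 0; 0; -1]; [:: 0; 0; 1; 0]; [:: 0; -1; 0; 0]; [:: 1; 0; 0; 0]].
Lemma c_t : j1m *m j2m = tm. Proof. c4. Qed.
Lemma c_k : j1m *m j2m *m dm = km. Proof. rewrite c_t; c4. Qed.

Ltac p4 := case=> [[|[|[|[|?]]]] ?] //; case=> [[|[|[|[|?]]]] ?] //;
  rewrite !mxE ?big_ord_recr ?big_ord0 /= ?mxE /= /pm10; lra.

Lemma c_pm_j1 i j : pm10 ((j1m^T *m g0) i j). Proof. move: i j; p4. Qed.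
Lemma c_pm_j2 i j : pm10 ((j2m^T *m g0) i j). Proof. move: i j; p4. Qed.
Lemma c_pm_k i j : pm10 ((km^T *m g0) i j). Proof. move: i j; p4. Qed.
Lemma c_g0d i : pm1 (g0 i i). Proof. case: i => [[|[|[|[|?]]]] ?] //; rewrite !mxE /= /pm1; lra. Qed.
Lemma c_g0o i j : i != j -> g0 i j = 0.
Proof. case: i => [[|[|[|[|?]]]] ?] //; case: j => [[|[|[|[|?]]]] ?] //; rewrite !mxE //. Qed.
Lemma c_gg : g0 *m g0 = 1%:M. Proof. c4. Qed.
End C4.




Section Block.
Variable R : realType.

Lemma m4E (l : seq (seq R)) i j : m4 R l i j = nth 0 (nth [::] l i) j.
Proof. by rewrite mxE. Qed.
Lemma oppE m n (A : 'M[R]_(m,n)) i j : (- A) i j = - A i j.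
Proof. by rewrite mxE. Qed.

Lemma find_block M (G J1 J2 : 'M[R]_M.+1) :
 G^T = G -> G \in unitmx -> J1 *m J1 = 1%:M -> J2 *m J2 = 1%:M ->
 J1 *m J2 = -(J2 *m J1) -> J1^T *m G = -(G *m J1) -> J2^T *m G = -(G *m J2) ->
 exists e (Y : 'M[R]_(M.+1, 4)), pm1 e /\ J1 *m Y = Y *m j1m R /\
   J2 *m Y = Y *m j2m R /\ Y^T *m G *m Y = e *: g0 R.
Proof.
move=> sG uG h11 h22 hA s1 s2.
have r1 v : J1 *m (J1 *m v) = v :> 'cV_M.+1 by rewrite mulmxA h11 mul1mx.
have r2 v : J2 *m (J2 *m v) = v :> 'cV_M.+1 by rewrite mulmxA h22 mul1mx.
have r21 v : J2 *m (J1 *m v) = -(J1 *m (J2 *m v)) :> 'cV_M.+1.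
  by rewrite !mulmxA hA mulNmx opprK.
have sk1 v w : bform G (J1 *m v) w = - bform G v (J1 *m w) by apply: bform_skew.
have sk2 v w : bform G (J2 *m v) w = - bform G v (J2 *m w) by apply: bform_skew.
have [u hu] : exists u : 'cV_M.+1, bform G u u != 0.
  case: (pickP (fun i => G i i != 0)) => [i hi|h0].
    by exists (delta_mx i 0); rewrite bform_delta.
  case: (pickP (fun ij : 'I_M.+1 * 'I_M.+1 => G ij.1 ij.2 != 0)) => [[i j] hij | h1].
    exists (delta_mx i 0 + delta_mx j 0).
    rewrite bformD !bformDr !bform_delta.
    have -> : G j i = G i j by rewrite -[in RHS]sG mxE.
    move/negbFE/eqP: (h0 i) => ->; move/negbFE/eqP: (h0 j) => ->.
    by rewrite add0r addr0 -mulr2n mulrn_eq0 /= hij.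
  have G0 : G = 0 by apply/matrixP => i j; move/negbFE/eqP: (h1 (i, j)) => ->; rewrite mxE.
  by move: uG; rewrite G0 unitmxE det0 unitr0.
set c := bform G u u.
have nc : 0 < `|c| by rewrite normr_gt0.
set s := Num.sqrt `|c|.
have ss : s * s = `|c| by rewrite -expr2 sqr_sqrtr // ltW.
have sn0 : s != 0 by rewrite sqrtr_eq0 (lt_geF nc).
pose u0 := s^-1 *: u.
pose e := c / `|c|.
have he : bform G u0 u0 = e.
  by rewrite /u0 bformZ bformZr mulrA -invfM ss mulrC.
have pe : pm1 e.
  rewrite /e /pm1; case: (ltrgtP c 0) => hc.
  - by right; rewrite ltr0_norm // invrN mulrN divff // lt_eqF.
  - by left; rewrite gtr0_norm // divff // gt_eqF.
  - by move: hu; rewrite -/c hc eqxx.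
have a1 : bform G u0 (J1 *m u0) = 0.
  have : bform G u0 (J1 *m u0) = - bform G u0 (J1 *m u0) by rewrite {1}bform_sym // sk1.
  lra.
have a2 : bform G u0 (J2 *m u0) = 0.
  have : bform G u0 (J2 *m u0) = - bform G u0 (J2 *m u0) by rewrite {1}bform_sym // sk2.
  lra.
have a3 : bform G u0 (J1 *m (J2 *m u0)) = 0.
  have : bform G u0 (J1 *m (J2 *m u0)) = - bform G u0 (J1 *m (J2 *m u0)).
    by rewrite {1}bform_sym // sk1 sk2 r21 bformN opprK.
  lra.
pose y k := nth 0 [:: u0; J1 *m u0; J2 *m u0; J1 *m (J2 *m u0)] k.
pose Y : 'M[R]_(M.+1, 4) := \matrix_(i, k) (y k) i 0.
have colY k : col k Y = y k by apply/colP => i; rewrite !mxE.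
have YE i k : Y i k = y k i 0 by rewrite mxE.
exists e, Y; split => //; split; [|split].
- apply/matrixP => i k; rewrite [LHS]mulmx_colE colY [RHS]mxE.
  rewrite !big_ord_recr big_ord0 /= !YE !m4E.
  case: k => [[|[|[|[|?]]]] ?] //=; rewrite ?r1 ?r2 ?r21 ?oppE; ring.
- apply/matrixP => i k; rewrite [LHS]mulmx_colE colY [RHS]mxE.
  rewrite !big_ord_recr big_ord0 /= !YE !m4E.
  case: k => [[|[|[|[|?]]]] ?] //=; rewrite ?r1 ?r2 ?r21 ?mulmxN ?r2 ?oppE; ring.
- apply/matrixP => k l; rewrite -bform_col !colY mxE m4E.
  case: k => [[|[|[|[|?]]]] ?] //=; case: l => [[|[|[|[|?]]]] ?] //=;
  rewrite ?(sk1, sk2, r21, r1, r2, mulmxN, bformN, opprK) ?a1 ?a2 ?a3 ?he; ring.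
Qed.

End Block.



Section Compl.
Variable R : realType.

Lemma ge_sq (e : R) : pm1 e -> (e *: g0 R) *m (e *: g0 R) = 1%:M.
Proof.
move=> pe; rewrite -scalemxAl -scalemxAr scalerA c_gg.
have -> : e * e = 1 by case: pe => ->; ring.
by rewrite scale1r.
Qed.

Lemma complement M (G J1 J2 : 'M[R]_M) e (Y : 'M[R]_(M,4)) :
 G^T = G -> J1^T *m G = -(G *m J1) -> J2^T *m G = -(G *m J2) -> pm1 e ->
 J1 *m Y = Y *m j1m R -> J2 *m Y = Y *m j2m R -> Y^T *m G *m Y = e *: g0 R ->
 exists r (Z : 'M[R]_(M, r)) (J1' J2' : 'M[R]_r), (4 + r)%N = M /\
   Y^T *m G *m Z = 0 /\ row_free (row_mx Y Z)^T /\
   J1 *m Z = Z *m J1' /\ J2 *m Z = Z *m J2'.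
Proof.
move=> sG s1 s2 pe hY1 hY2 hYG.
have gg := ge_sq e pe.
have ug : (e *: g0 R) \in unitmx by case/mulmx1_unit: gg.
pose K0 := kermx (G *m Y).
have [Zt [ZK [Zfree Zsub]]] : exists Zt : 'M_(\rank K0, M),
    Zt *m (G *m Y) = 0 /\ row_free Zt /\ (K0 <= Zt)%MS.
  exists (row_base K0); split; last split.
  - by apply/sub_kermxP; rewrite eq_row_base submx_refl.
  - exact: row_base_free.
  - by rewrite eq_row_base submx_refl.
have rk : \rank (G *m Y) = 4.
  apply/eqP; rewrite eqn_leq rank_leq_col /=.
  have := mxrankM_maxr Y^T (G *m Y); rewrite mulmxA hYG mxrank_unit //.
have le4 : (4 <= M)%N by have := rank_leq_row (G *m Y); rewrite rk.
have stab (J : 'M[R]_M) (j : 'M[R]_4) : J^T *m G = -(G *m J) -> J *m Y = Y *m j ->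
    exists J', J *m Zt^T = Zt^T *m J'.
  move=> sJ hJ.
  have : (Zt *m J^T <= Zt)%MS.
    apply: submx_trans Zsub; apply/sub_kermxP.
    rewrite -mulmxA.
    have -> : J^T *m (G *m Y) = - (G *m Y *m j).
      by rewrite mulmxA sJ mulNmx -[G *m J *m Y]mulmxA hJ mulmxA.
    by rewrite mulmxN mulmxA ZK mul0mx oppr0.
  case/submxP => P hP; exists P^T.
  by rewrite -[J]trmxK -trmx_mul hP trmx_mul.
have [J1' h1] := stab J1 _ s1 hY1.
have [J2' h2] := stab J2 _ s2 hY2.
exists (\rank K0), Zt^T, J1', J2'; split; [|split; [|split]] => //.
- by rewrite mxrank_ker rk subnKC.
- by rewrite -[X in X = 0]trmxK (trmx_mul (Y^T *m G)) (trmx_mul Y^T G) !trmxK sG ZK trmx0.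
- rewrite -kermx_eq0 tr_row_mx trmxK; apply/eqP.
  set B := kermx _.
  have hB := mulmx_ker (col_mx Y^T Zt); rewrite -/B in hB.
  rewrite -[B]hsubmxK mul_row_col in hB *.
  set B1 := lsubmx B; set B2 := rsubmx B.
  have hB1 : B1 = 0.
    have := congr1 (mulmx^~ (G *m Y)) hB; rewrite /= mul0mx mulmxDl.
    rewrite -!mulmxA ZK mulmx0 addr0 (mulmxA Y^T) hYG => h.
    by rewrite -[B1]mulmx1 -gg mulmxA h mul0mx.
  rewrite -/B1 hB1 mul0mx add0r -/B2 in hB.
  have hB2 : B2 = 0.
    by apply: (row_free_inj Zfree); rewrite /= hB mul0mx.
  by rewrite hB1 hB2 row_mx0.
Qed.
End Compl.



Section BD.
Variable R : realType.
Definition bd m n (A : 'M[R]_m) (B : 'M[R]_n) : 'M[R]_(m + n) := block_mx A 0 0 B.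
Arguments bd {m n}.

Lemma bd_mul m n (A C : 'M[R]_m) (B D : 'M[R]_n) :
  bd A B *m bd C D = bd (A *m C) (B *m D).
Proof. by rewrite /bd mulmx_block !mulmx0 !mul0mx !addr0 !add0r. Qed.

Lemma bd_tr m n (A : 'M[R]_m) (B : 'M[R]_n) : (bd A B)^T = bd A^T B^T.
Proof. by rewrite /bd tr_block_mx !trmx0. Qed.

Lemma bd1 m n : bd (1%:M : 'M[R]_m) (1%:M : 'M[R]_n) = 1%:M.
Proof. by rewrite /bd -scalar_mx_block. Qed.

Lemma bdN m n (A : 'M[R]_m) (B : 'M[R]_n) : - bd A B = bd (- A) (- B).
Proof. by rewrite /bd opp_block_mx !oppr0. Qed.

Lemma bd_unit m n (A : 'M[R]_m) (B : 'M[R]_n) :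
  A \in unitmx -> B \in unitmx -> bd A B \in unitmx.
Proof. by rewrite !unitmxE /bd det_ublock unitrM => -> ->. Qed.

Lemma bd_unitr m n (A : 'M[R]_m) (B : 'M[R]_n) :
  bd A B \in unitmx -> B \in unitmx.
Proof. by rewrite !unitmxE /bd det_ublock unitrM => /andP[]. Qed.

Lemma bd_entryP (P : R -> Prop) m n (A : 'M[R]_m) (B : 'M[R]_n) :
  P 0 -> (forall i j, P (A i j)) -> (forall i j, P (B i j)) ->
  forall i j, P (bd A B i j).
Proof.
move=> P0 hA hB i j; rewrite -(splitK i) -(splitK j).
case: (split i) => k; case: (split j) => l /=;
  by rewrite /bd ?block_mxEul ?block_mxEur ?block_mxEdl ?block_mxEdr ?mxE.
Qed.

Lemma bd_od m n (A : 'M[R]_m) (B : 'M[R]_n) :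
  (forall i j, i != j -> A i j = 0) -> (forall i j, i != j -> B i j = 0) ->
  forall i j, i != j -> bd A B i j = 0.
Proof.
move=> hA hB i j; rewrite -(splitK i) -(splitK j).
case: (split i) => k; case: (split j) => l /= hkl;
  rewrite /bd ?block_mxEul ?block_mxEur ?block_mxEdl ?block_mxEdr ?mxE //.
- by apply: hA; apply: contra hkl => /eqP ->.
- by apply: hB; apply: contra hkl => /eqP ->.
Qed.

Lemma bd_d (P : R -> Prop) m n (A : 'M[R]_m) (B : 'M[R]_n) :
  (forall i, P (A i i)) -> (forall i, P (B i i)) -> forall i, P (bd A B i i).
Proof.
move=> hA hB i; rewrite -(splitK i).
by case: (split i) => k /=; rewrite /bd ?block_mxEul ?block_mxEdr.
Qed.

Lemma XW m n (Y : 'M[R]_(m + n, m)) (Z : 'M[R]_(m + n, n)) W w W' :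
  W *m Y = Y *m w -> W *m Z = Z *m W' -> W *m row_mx Y Z = row_mx Y Z *m bd w W'.
Proof.
move=> h1 h2; rewrite mul_mx_row /bd mul_row_block h1 h2.
by rewrite !mulmx0 addr0 add0r.
Qed.

Lemma XGX m n (G : 'M[R]_(m + n)) (Y : 'M[R]_(m + n, m)) (Z : 'M[R]_(m + n, n)) :
  G^T = G -> Y^T *m G *m Z = 0 ->
  (row_mx Y Z)^T *m G *m row_mx Y Z = bd (Y^T *m G *m Y) (Z^T *m G *m Z).
Proof.
move=> sG h; rewrite tr_row_mx mul_col_mx mul_col_row h /bd.
congr block_mx.
by rewrite -[LHS]trmxK (trmx_mul (Z^T *m G) Y) (trmx_mul Z^T G) trmxK sG mulmxA h trmx0.
Qed.

Lemma bd_form m n (X G : 'M[R]_(m + n)) W w W' A B (C' : 'M[R]_n) :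
  W *m X = X *m bd w W' -> X^T *m G *m X = bd A B ->
  (W *m (X *m bd 1%:M C'))^T *m G *m (X *m bd 1%:M C') =
    bd (w^T *m A) ((W' *m C')^T *m B *m C').
Proof.
move=> hW hG.
rewrite (mulmxA W X) hW -(mulmxA X) bd_mul mulmx1 trmx_mul.
rewrite -!mulmxA (mulmxA X^T) (mulmxA (X^T *m G)) hG bd_tr.
by rewrite !bd_mul mulmx1 mulmxA.
Qed.
End BD.
Arguments bd [R m n] A B.
Arguments bd_mul [R m n] A C B D.
Arguments bd_tr [R m n] A B.
Arguments bdN [R m n] A B.
Arguments bd_unit [R m n A B] _ _.
Arguments bd_unitr [R m n A B] _.
Arguments bd_entryP [R P m n A B] _ _ _ i j.
Arguments bd_od [R m n A B] _ _ [i j] _.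
Arguments bd_d [R P m n A B] _ _ i.
Arguments XW [R m n Y Z W w W'] _ _.
Arguments XGX [R m n G Y Z] _ _.
Arguments bd_form [R m n X G W w W' A B] C' _ _.



Section Dec.
Variable R : realType.

Definition hypP M (G J1 J2 : 'M[R]_M) :=
  G^T = G /\ G \in unitmx /\ J1 *m J1 = 1%:M /\ J2 *m J2 = 1%:M /\
  J1 *m J2 = -(J2 *m J1) /\ J1^T *m G = -(G *m J1) /\ J2^T *m G = -(G *m J2).

Definition decP M (G J1 J2 : 'M[R]_M) :=
  exists C D : 'M[R]_M, C \in unitmx /\ D *m J1 = J1 *m D /\ D *m J2 = J2 *m D /\
   D^T *m G = -(G *m D) /\ D *m D = 1%:M /\
   (forall a b, a != b -> (C^T *m G *m C) a b = 0) /\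
   (forall a, pm1 ((C^T *m G *m C) a a)) /\
   (forall a b, pm10 (((J1 *m C)^T *m G *m C) a b)) /\
   (forall a b, pm10 (((J2 *m C)^T *m G *m C) a b)) /\
   (forall a b, pm10 (((J1 *m J2 *m D *m C)^T *m G *m C) a b)).

Arguments hypP {M}.
Arguments decP {M}.

Lemma sub_hyp r (G J1 J2 : 'M[R]_(4 + r)) e (Y : 'M[R]_(4 + r, 4)) (Z : 'M[R]_(4 + r, r))
  (J1' J2' : 'M[R]_r) :
  hypP G J1 J2 -> pm1 e -> Y^T *m G *m Y = e *: g0 R -> Y^T *m G *m Z = 0 ->
  row_mx Y Z \in unitmx -> J1 *m Z = Z *m J1' -> J2 *m Z = Z *m J2' ->
  hypP (Z^T *m G *m Z) J1' J2'.
Proof.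
move=> [sG [uG [h11 [h22 [hA [s1 s2]]]]]] pe hYG hYZ uX hZ1 hZ2.
have Zc (A B : 'M[R]_r) : Z *m A = Z *m B -> A = B.
  have hZ : Z = row_mx Y Z *m col_mx 0 1%:M by rewrite mul_row_col mulmx0 add0r mulmx1.
  rewrite hZ -!mulmxA => /(congr1 (mulmx (invmx (row_mx Y Z)))).
  by rewrite !mulKmx // !mul_col_mx !mul0mx !mul1mx => /eq_col_mx[].
have sk (J : 'M[R]_(4 + r)) (Jr : 'M[R]_r) : J^T *m G = -(G *m J) -> J *m Z = Z *m Jr ->
    Jr^T *m (Z^T *m G *m Z) = - (Z^T *m G *m Z *m Jr).
  move=> sJ hJ.
  rewrite !mulmxA -trmx_mul -hJ trmx_mul -[Z^T *m J^T *m G]mulmxA sJ mulmxN mulNmx.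
  by rewrite -!mulmxA hJ.
split; [|split; [|split; [|split; [|split; [|split]]]]].
- by rewrite !trmx_mul trmxK sG mulmxA.
- have : (row_mx Y Z)^T *m G *m row_mx Y Z \in unitmx.
    by rewrite !unitmx_mul unitmx_tr uX uG.
  by rewrite XGX // => /bd_unitr.
- apply: Zc; rewrite mulmxA -hZ1 -mulmxA -hZ1 mulmxA h11 mul1mx mulmx1 //.
- apply: Zc; rewrite mulmxA -hZ2 -mulmxA -hZ2 mulmxA h22 mul1mx mulmx1 //.
- apply: Zc; rewrite mulmxN !mulmxA -hZ1 -hZ2 -!mulmxA -hZ1 -hZ2 !mulmxA hA.
  by rewrite mulNmx.
- exact: (sk J1 J1' s1 hZ1).
- exact: (sk J2 J2' s2 hZ2).
Qed.

Lemma pm1M (a b : R) : pm1 a -> pm1 b -> pm1 (a * b).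
Proof. by rewrite /pm1 => [[]->[]->]; lra. Qed.
Lemma pm10M (a b : R) : pm1 a -> pm10 b -> pm10 (a * b).
Proof. by rewrite /pm1 /pm10 => [[]->[->|[]->]]; lra. Qed.

Lemma step r (G J1 J2 : 'M[R]_(4 + r)) e (Y : 'M[R]_(4 + r, 4)) (Z : 'M[R]_(4 + r, r))
  (J1' J2' : 'M[R]_r) :
  hypP G J1 J2 -> pm1 e -> J1 *m Y = Y *m j1m R -> J2 *m Y = Y *m j2m R ->
  Y^T *m G *m Y = e *: g0 R -> Y^T *m G *m Z = 0 ->
  row_mx Y Z \in unitmx -> J1 *m Z = Z *m J1' -> J2 *m Z = Z *m J2' ->
  decP (Z^T *m G *m Z) J1' J2' -> decP G J1 J2.
Proof.
move=> [sG [uG [h11 [h22 [hA [s1 s2]]]]]] pe hY1 hY2 hYG hYZ uX hZ1 hZ2.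
move=> [C' [D' [uC' [dc1 [dc2 [dsk [dd [od [dg [i1 [i2 i3]]]]]]]]]]].
set X := row_mx Y Z.
have hX1 : J1 *m X = X *m bd (j1m R) J1' := XW hY1 hZ1.
have hX2 : J2 *m X = X *m bd (j2m R) J2' := XW hY2 hZ2.
have hG := XGX sG hYZ; rewrite hYG in hG.
have [D hD] : exists D, D *m X = X *m bd (dm R) D'.
  by exists (X *m bd (dm R) D' *m invmx X); rewrite mulmxKV.
have canc (A B : 'M[R]_(4 + r)) : A *m X = B *m X -> A = B.
  by move/(congr1 (mulmx^~ (invmx X))); rewrite !mulmxK.
have uXT : X^T \in unitmx by rewrite unitmx_tr.
have cancT (A B : 'M[R]_(4 + r)) : X^T *m A *m X = X^T *m B *m X -> A = B.
  by move/canc/(congr1 (mulmx (invmx X^T))); rewrite !mulKmx.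
have hK : J1 *m J2 *m D *m X = X *m bd (km R) (J1' *m J2' *m D').
  rewrite -!mulmxA hD (mulmxA J2 X) hX2 -mulmxA bd_mul (mulmxA J1 X) hX1 -mulmxA bd_mul.
  by rewrite !mulmxA c_k.
have h1X : 1%:M *m X = X *m bd 1%:M 1%:M by rewrite bd1 mul1mx mulmx1.
have HC := bd_form C' h1X hG.
rewrite !mul1mx trmx1 mul1mx in HC.
exists (X *m bd 1%:M C'), D.
split; [|split; [|split; [|split; [|split; [|split; [|split; [|split; [|split]]]]]]]].
- by rewrite unitmx_mul uX bd_unit // unitmx1.
- apply: canc.
  have -> : D *m J1 *m X = X *m bd (dm R *m j1m R) (D' *m J1').
    by rewrite -mulmxA hX1 mulmxA hD -mulmxA bd_mul.
  have -> : J1 *m D *m X = X *m bd (j1m R *m dm R) (J1' *m D').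
    by rewrite -mulmxA hD mulmxA hX1 -mulmxA bd_mul.
  by rewrite c_dj1 dc1.
- apply: canc.
  have -> : D *m J2 *m X = X *m bd (dm R *m j2m R) (D' *m J2').
    by rewrite -mulmxA hX2 mulmxA hD -mulmxA bd_mul.
  have -> : J2 *m D *m X = X *m bd (j2m R *m dm R) (J2' *m D').
    by rewrite -mulmxA hD mulmxA hX2 -mulmxA bd_mul.
  by rewrite c_dj2 dc2.
- apply: cancT.
  have -> : X^T *m (D^T *m G) *m X = (bd (dm R) D')^T *m bd (e *: g0 R) (Z^T *m G *m Z).
    by rewrite mulmxA -trmx_mul hD trmx_mul -hG !mulmxA.
  have -> : X^T *m (- (G *m D)) *m X = - (bd (e *: g0 R) (Z^T *m G *m Z) *m bd (dm R) D').
    by rewrite -hG mulmxN mulNmx -!mulmxA hD.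
  rewrite bd_tr !bd_mul bdN dsk -scalemxAr -scalemxAl c_dskew scalerN.
  by [].
- apply: canc.
  by rewrite -mulmxA hD mulmxA hD -mulmxA bd_mul c_dd dd bd1 mulmx1 mul1mx.
- rewrite HC; apply: bd_od => // i j hij.
  by rewrite mxE c_g0o // mulr0.
- rewrite HC; apply: (bd_d (P := @pm1 R)) => // i.
  by rewrite mxE; apply: pm1M => //; apply: c_g0d.
- rewrite (bd_form C' hX1 hG); apply: (bd_entryP (P := @pm10 R)) => //.
    by rewrite /pm10; right; right.
  by move=> i j; rewrite -scalemxAr mxE; apply: pm10M => //; apply: c_pm_j1.
- rewrite (bd_form C' hX2 hG); apply: (bd_entryP (P := @pm10 R)) => //.
    by rewrite /pm10; right; right.
  by move=> i j; rewrite -scalemxAr mxE; apply: pm10M => //; apply: c_pm_j2.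
- rewrite (bd_form C' hK hG); apply: (bd_entryP (P := @pm10 R)) => //.
    by rewrite /pm10; right; right.
  by move=> i j; rewrite -scalemxAr mxE; apply: pm10M => //; apply: c_pm_k.
Qed.

Lemma dec M (G J1 J2 : 'M[R]_M) : hypP G J1 J2 -> decP G J1 J2.
Proof.
elim/ltn_ind: M G J1 J2 => M IH G J1 J2 H.
case: (posnP M) => [M0|Mpos].
  subst M; exists 1%:M, 1%:M.
  do 9 (split; first by (apply/matrixP => -[] || case || rewrite unitmx1)).
  by case.
have [e [Y [pe [hY1 [hY2 hYG]]]]] : exists e (Y : 'M[R]_(M,4)), pm1 e /\
    J1 *m Y = Y *m j1m R /\ J2 *m Y = Y *m j2m R /\ Y^T *m G *m Y = e *: g0 R.
  move: G J1 J2 H {IH}; case: M Mpos => // m _ G J1 J2.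
  move=> [sG [uG [h11 [h22 [hA [s1 s2]]]]]]; exact: find_block.
have H' := H; case: H' => [sG [uG [h11 [h22 [hA [s1 s2]]]]]].
have [r [Z [J1' [J2' [e4 [hYZ [fr [hZ1 hZ2]]]]]]]] :=
  @complement R _ _ _ _ _ _ sG s1 s2 pe hY1 hY2 hYG.
subst M.
have uX : row_mx Y Z \in unitmx by rewrite -unitmx_tr -row_free_unit.
apply: (@step r G J1 J2 e Y Z J1' J2' H pe hY1 hY2 hYG hYZ uX hZ1 hZ2).
apply: IH; first by rewrite addnC -addSnnS leq_addr.
exact: (@sub_hyp r G J1 J2 e Y Z J1' J2' H pe hYG hYZ uX hZ1 hZ2).
Qed.
End Dec.



Section Main.
Variable R : realType.

Lemma tensDl m n p q (A B : 'M[R]_(m, n)) (C : 'M[R]_(p, q)) :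
  (A + B) *t C = A *t C + B *t C.
Proof. by apply/matrixP => i j; rewrite !mxE mulrDl. Qed.
Lemma tensDr m n p q (A : 'M[R]_(m, n)) (B C : 'M[R]_(p, q)) :
  A *t (B + C) = A *t B + A *t C.
Proof. by apply/matrixP => i j; rewrite !mxE mulrDr. Qed.
Lemma tensZl m n p q (c : R) (A : 'M[R]_(m, n)) (C : 'M[R]_(p, q)) :
  (c *: A) *t C = c *: (A *t C).
Proof. by apply/matrixP => i j; rewrite !mxE mulrA. Qed.
Lemma tensZr m n p q (c : R) (A : 'M[R]_(m, n)) (C : 'M[R]_(p, q)) :
  A *t (c *: C) = c *: (A *t C).
Proof. by apply/matrixP => i j; rewrite !mxE mulrCA. Qed.
Lemma tensNl m n p q (A : 'M[R]_(m, n)) (C : 'M[R]_(p, q)) :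
  (- A) *t C = - (A *t C).
Proof. by apply/matrixP => i j; rewrite !mxE mulNr. Qed.
Lemma tensNr m n p q (A : 'M[R]_(m, n)) (C : 'M[R]_(p, q)) :
  A *t (- C) = - (A *t C).
Proof. by apply/matrixP => i j; rewrite !mxE mulrN. Qed.
Lemma tens11 m n : (1%:M : 'M[R]_m) *t (1%:M : 'M[R]_n) = 1%:M.
Proof.
apply/matrixP => i j.
case: (mxtens_indexP i) => i1 i2; case: (mxtens_indexP j) => j1 j2.
rewrite tensmxE !mxE (inj_eq (can_inj (@mxtens_indexK _ _))) xpair_eqE.
by case: (i1 == j1); case: (i2 == j2); rewrite /= ?mul1r ?mul0r.
Qed.
Lemma tens_unit m n (A : 'M[R]_m) (B : 'M[R]_n) :
  A \in unitmx -> B \in unitmx -> A *t B \in unitmx.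
Proof.
move=> uA uB.
have : (invmx A *t invmx B) *m (A *t B) = 1%:M by rewrite tensmx_mul !mulVmx // tens11.
by case/mulmx1_unit.
Qed.

Lemma lin0 p q N (J : 'rV[R]_(p + q) -> 'M[R]_N) : clmodule J -> J 0 = 0.
Proof.
move=> [lin _]; have := lin 1 0 0; rewrite !scale1r addr0 => h.
by have := congr1 (fun x => x - J 0) h; rewrite addrK subrr => ->.
Qed.

Lemma skew_mat N (G A : 'M[R]_N) :
  (forall u v, bform G (A *m u) v = - bform G u (A *m v)) -> A^T *m G = -(G *m A).
Proof.
move=> h; apply/matrixP => i j.
have := h (col i 1%:M) (col j 1%:M).
rewrite -!col_mulmx !bform_col !mulmx1 trmx1 mul1mx => ->.
by rewrite !mxE.
Qed.

Lemma qform_gen p q (k : 'I_(p + q)) :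
  qform (gen R k) = if (k < p)%N then 1 else -1.
Proof.
rewrite /qform (bigD1 k) //= big1 ?addr0 => [|i hi]; rewrite /gen mxE eqxx /=.
  by rewrite eqxx expr1n mulr1.
by rewrite (negbTE hi) expr0n mulr0.
Qed.


Lemma U_struct M (JU : 'rV[R]_(0 + 2) -> 'M[R]_M) GU : admissible JU GU ->
 exists K C : 'M[R]_M, C \in unitmx /\ (forall w, K *m JU w = -(JU w *m K)) /\
   K *m K = -(1%:M) /\ K^T *m GU = GU *m K /\
   (forall a b, a != b -> (C^T *m GU *m C) a b = 0) /\
   (forall a, pm1 ((C^T *m GU *m C) a a)) /\
   (forall (j : 'I_(0 + 2)) a b, pm10 (((JU (gen R j) *m C)^T *m GU *m C) a b)) /\
   (forall a b, pm10 (((K *m C)^T *m GU *m C) a b)).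
Proof.
move=> [[lin cl] [[sG uG] sk]].
pose i0 : 'I_(0 + 2) := @Ordinal 2 0 isT.
pose i1 : 'I_(0 + 2) := @Ordinal 2 1 isT.
pose J1 := JU (gen R i0); pose J2 := JU (gen R i1).
have h11 : J1 *m J1 = 1%:M by rewrite /J1 cl qform_gen /= opprK scale1r.
have h22 : J2 *m J2 = 1%:M by rewrite /J2 cl qform_gen /= opprK scale1r.
have hA : J1 *m J2 = - (J2 *m J1).
  have := cl (gen R i0 + gen R i1).
  have -> : JU (gen R i0 + gen R i1) = J1 + J2 by rewrite -[gen R i0]scale1r lin scale1r.
  have -> : qform (gen R i0 + gen R i1) = -2.
    by rewrite /qform !big_ord_recr big_ord0 /= !mxE /=; ring.
  rewrite mulmxDl !mulmxDr h11 h22 opprK => h.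
  apply/eqP; rewrite -addr_eq0; apply/eqP.
  have e2 : (2 : R) *: (1%:M : 'M[R]_M) = 1%:M + 1%:M by rewrite scalerDl scale1r.
  rewrite e2 [1%:M + _]addrC addrACA in h.
  by move/(canRL (addrK _)): h; rewrite subrr.
have s1 : J1^T *m GU = - (GU *m J1) by apply: skew_mat; apply: sk.
have s2 : J2^T *m GU = - (GU *m J2) by apply: skew_mat; apply: sk.
have [C [D [uC [dc1 [dc2 [dsk [dd [od [dg [i1' [i2' i3']]]]]]]]]]] :=
  @dec R M GU J1 J2 (conj sG (conj uG (conj h11 (conj h22 (conj hA (conj s1 s2)))))).
have JUE w : JU w = w 0 i0 *: J1 + w 0 i1 *: J2.
  have hw : w = w 0 i0 *: gen R i0 + (w 0 i1 *: gen R i1 + 0).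
    apply/matrixP => i j; rewrite [i]ord1 !mxE.
    by case: j => [[|[|j]] hj] //=; rewrite ?mulr1 ?mulr0 ?addr0 ?add0r //; congr (w 0 _); apply: val_inj.
  by rewrite {1}hw !lin (@lin0 0 2 M JU (conj lin cl)) addr0.
have hB : J2 *m J1 = - (J1 *m J2) by rewrite hA opprK.
exists (J1 *m J2 *m D), C.
have K1 : J1 *m J2 *m D *m J1 = - (J1 *m (J1 *m J2 *m D)).
  by rewrite -!mulmxA dc1 (mulmxA J2 J1 D) hB mulNmx mulmxN -mulmxA.
have K2 : J1 *m J2 *m D *m J2 = - (J2 *m (J1 *m J2 *m D)).
  by rewrite -!mulmxA dc2 (mulmxA J2 J2 D) h22 mul1mx (mulmxA J2 J1) hB mulNmx
    opprK -mulmxA (mulmxA J2 J2 D) h22 mul1mx.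
split => //; split; [|split; [|split]].
- move=> w; rewrite JUE mulmxDr mulmxDl -!scalemxAr -!scalemxAl K1 K2.
  by rewrite !scalerN opprD.
- have E : J1 *m J2 *m D *m (J1 *m J2 *m D) = J1 *m J2 *m (J1 *m J2) *m (D *m D).
    rewrite -!mulmxA (mulmxA D J1) dc1 -(mulmxA J1 D) (mulmxA D J2) dc2 -(mulmxA J2 D).
    by [].
  rewrite E dd mulmx1 -!mulmxA (mulmxA J2 J1 J2) hB mulNmx mulmxN -(mulmxA J1 J2 J2).
  by rewrite h22 mulmx1 h11.
- rewrite !trmx_mul -!mulmxA s1 !mulmxN (mulmxA J2^T GU J1) s2 mulNmx mulmxN opprK.
  rewrite -(mulmxA GU J2 J1) (mulmxA D^T GU) dsk hB mulmxN mulNmx opprK -mulmxA.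
  by rewrite (mulmxA D J1 J2) dc1 -(mulmxA J1 D J2) dc2 !mulmxA.
- split => //; split => //; split; last by [].
  move=> j a b; case: j => [[|[|j]] hj] //;
    first [ by have -> : Ordinal hj = i0 by apply: val_inj
          | by have -> : Ordinal hj = i1 by apply: val_inj ].
Qed.
End Main.



Section Fin.
Variable R : realType.

Definition zV n (z : 'rV[R]_(0 + (n + 2))) : 'rV[R]_(n + 0) :=
  \row_i z 0 (lshift 2 (cast_ord (addn0 n) i)).
Definition zU n (z : 'rV[R]_(0 + (n + 2))) : 'rV[R]_(0 + 2) :=
  \row_j z 0 (rshift n j).

Arguments zV {n}.
Arguments zU {n}.

Lemma qsplit n (z : 'rV[R]_(0 + (n + 2))) :
  qform z = qform (zU z) - qform (zV z).
Proof.
rewrite /qform.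
have -> : \sum_(i < 0 + (n + 2)) (if (i < 0)%N then 1 else -1) * z 0 i ^+ 2 =
    \sum_(i < n + 2) (if (i < 0)%N then 1 else -1) * z 0 i ^+ 2 by [].
rewrite big_split_ord /=.
rewrite (reindex (cast_ord (esym (addn0 n)))) /=; last first.
  by exists (cast_ord (addn0 n)) => i _; rewrite ?cast_ordK ?cast_ordKV.
have -> : \sum_(j < n) (if (cast_ord (esym (addn0 n)) j < n)%N then 1 else -1) *
     zV z 0 (cast_ord (esym (addn0 n)) j) ^+ 2 = \sum_(j < n) z 0 (lshift 2 j) ^+ 2.
  apply: eq_bigr => j _; rewrite /= ltn_ord mul1r /zV mxE cast_ordKV //.
have -> : \sum_(j < 0 + 2) (if (j < 0)%N then 1 else -1) * zU z 0 j ^+ 2 =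
     - \sum_(j < 2) z 0 (rshift n j) ^+ 2.
  by rewrite -sumrN; apply: eq_bigr => j _; rewrite /= mulN1r /zU mxE.
by rewrite addrC; congr (_ + _); rewrite -sumrN; apply: eq_bigr => j _; rewrite mulN1r.
Qed.
End Fin.
Arguments zV {R n}.
Arguments zU {R n}.

Section Fin2.
Variable R : realType.

Lemma pm10M2 (a b : R) : pm10 a -> pm10 b -> pm10 (a * b).
Proof. by rewrite /pm10 => [[->|[->|->]] [->|[->|->]]]; lra. Qed.

Lemma tens_pm10 m n p q (P : 'M[R]_(m, n)) (Q : 'M[R]_(p, q)) :
  (forall i j, pm10 (P i j)) -> (forall i j, pm10 (Q i j)) -> forall a b, pm10 ((P *t Q) a b).
Proof.
move=> hP hQ a b; case: (mxtens_indexP a) => a1 a2; case: (mxtens_indexP b) => b1 b2.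
by rewrite tensmxE; apply: pm10M2.
Qed.

Lemma gram_pm10 m (P : 'M[R]_m) : (forall a b, a != b -> P a b = 0) ->
  (forall a, pm1 (P a a)) -> forall a b, pm10 (P a b).
Proof.
move=> ho hd a b; case: (eqVneq a b) => [<-|h].
  by case: (hd a) => ->; rewrite /pm10; lra.
by rewrite ho // /pm10; lra.
Qed.

Theorem main_aux (n N M : nat)
  (JV : 'rV[R]_(n + 0) -> 'M[R]_N) (GV : 'M[R]_N)
  (JU : 'rV[R]_(0 + 2) -> 'M[R]_M) (GU : 'M[R]_M) :
  admissible_integral JV GV -> pos_definite GV ->
  admissible_integral JU GU ->
  exists J : 'rV[R]_(0 + (n + 2)) -> 'M[R]_(N * M),
    admissible_integral J (tensmx GV GU).
Proof.
move=> [[clmV [[sGV uGV] skV]] [BV [uBV [odV [dgV pmV]]]]] _ [admU _].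
have [K [C [uC [KJ [KK [KsG [odU [dgU [pmJ pmK]]]]]]]]] := @U_struct R M JU GU admU.
case: (admU) => [clmU [[sGU uGU] skU]].
case: (clmV) => [linV clV]; case: (clmU) => [linU clU].
have odV' a b : a != b -> (BV^T *m GV *m BV) a b = 0 by rewrite -bform_col; apply: odV.
have dgV' a : pm1 ((BV^T *m GV *m BV) a a) by rewrite -bform_col; apply: dgV.
have pmV' k a b : pm10 (((JV (gen R k) *m BV)^T *m GV *m BV) a b).
  by rewrite -bform_col col_mulmx; apply: pmV.
have grV := gram_pm10 _ _ odV' dgV'.
pose J z := JV (zV z) *t K + 1%:M *t JU (zU z).
have sV w : (JV w)^T *m GV = - (GV *m JV w) by apply: skew_mat; apply: skV.
have sU w : (JU w)^T *m GU = - (GU *m JU w) by apply: skew_mat; apply: skU.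
have sJ z : (J z)^T *m (GV *t GU) = - ((GV *t GU) *m J z).
  rewrite /J linearD /= !trmx_tens trmx1 mulmxDl !tensmx_mul mul1mx sV sU KsG.
  by rewrite mulmxDr !tensmx_mul mulmx1 tensNl tensNr opprD.
exists J; split; [split; [split|split]|].
- move=> a z w; rewrite /J.
  have -> : zV (a *: z + w) = a *: zV z + zV w by apply/matrixP => i j; rewrite !mxE.
  have -> : zU (a *: z + w) = a *: zU z + zU w by apply/matrixP => i j; rewrite !mxE.
  rewrite linV linU tensDl tensZl tensDr tensZr scalerDr.
  by rewrite addrACA.
- move=> z; rewrite /J mulmxDl !mulmxDr !tensmx_mul !mulmx1 !mul1mx KJ clV clU KK.
  rewrite tensNr addrA tensNr subrK tensZl tensZr tens11 (@qsplit R n z).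
  by apply/matrixP => i j; rewrite !mxE; ring.
- split; first by rewrite trmx_tens sGV sGU.
  exact: tens_unit.
- by move=> z u v; apply: bform_skew.
exists (BV *t C); split; first exact: tens_unit.
have gramE : (BV *t C)^T *m (GV *t GU) *m (BV *t C) =
    (BV^T *m GV *m BV) *t (C^T *m GU *m C) by rewrite trmx_tens !tensmx_mul.
split; [|split].
- move=> a b hab; rewrite bform_col gramE.
  move: hab; case: (mxtens_indexP a) => a1 a2; case: (mxtens_indexP b) => b1 b2 hab.
  rewrite tensmxE; case: (eqVneq a1 b1) => [e1|h1]; last by rewrite odV' // mul0r.
  case: (eqVneq a2 b2) => [e2|h2]; last by rewrite odU // mulr0.
  by move: hab; rewrite e1 e2 eqxx.
- move=> a; rewrite bform_col gramE.
  case: (mxtens_indexP a) => a1 a2; rewrite tensmxE; exact: pm1M.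
- move=> k a b; rewrite -col_mulmx bform_col.
  have -> : (J (gen R k) *m (BV *t C))^T *m (GV *t GU) *m (BV *t C) =
      ((JV (zV (gen R k)) *m BV)^T *m GV *m BV) *t ((K *m C)^T *m GU *m C) +
      (BV^T *m GV *m BV) *t ((JU (zU (gen R k)) *m C)^T *m GU *m C).
    rewrite /J mulmxDl !tensmx_mul mul1mx linearD /= !trmx_tens mulmxDl !tensmx_mul.
    by rewrite mulmxDl !tensmx_mul.
  pose k2 : 'I_(n + 2) := k.
  have -> : k = k2 by [].
  rewrite -(splitK k2); case: (split k2) => k' /=.
  + have -> : zU (gen R (lshift 2 k')) = 0.
      apply/matrixP => i j; rewrite !mxE -val_eqE /=.
      case: eqP => [/(congr1 (@nat_of_ord _)) /= h|//]; exfalso.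
      by have := ltn_ord k'; lia.
    have -> : zV (gen R (lshift 2 k')) = gen R (cast_ord (esym (addn0 n)) k').
      apply/matrixP => i j; rewrite !mxE -!val_eqE /=.
      rewrite [i]ord1 /=; congr (_ %:R); apply/eqP/eqP => [h|/(congr1 (@nat_of_ord _)) //].
    rewrite (@lin0 R _ _ _ _ clmU) !mul0mx trmx0 !mul0mx tensmx0 addr0.
    by apply: tens_pm10.
  + have -> : zV (gen R (rshift n k')) = 0.
      apply/matrixP => i j; rewrite !mxE -val_eqE /=.
      case: eqP => [/(congr1 (@nat_of_ord _)) /= h|//]; exfalso.
      by have := ltn_ord j; lia.
    have -> : zU (gen R (rshift n k')) = gen R (k' : 'I_(0 + 2)).
      apply/matrixP => i j; rewrite !mxE -!val_eqE /=.
      by rewrite [i]ord1 /= eqn_add2l.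
    rewrite (@lin0 R _ _ _ _ clmV) !mul0mx trmx0 !mul0mx tens0mx add0r.
    by apply: tens_pm10.
Qed.
End Fin2.

Theorem theorem7p5 (R : realType) (n N M : nat)
  (JV : 'rV[R]_(n + 0) -> 'M[R]_N) (GV : 'M[R]_N)
  (JU : 'rV[R]_(0 + 2) -> 'M[R]_M) (GU : 'M[R]_M) :
  admissible_integral JV GV -> pos_definite GV ->
  admissible_integral JU GU ->
  exists J : 'rV[R]_(0 + (n + 2)) -> 'M[R]_(N * M),
    admissible_integral J (tensmx GV GU).
Proof. exact: (@main_aux R n N M JV GV JU GU). Qed.
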